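(* Let $X$ be a real normed space and let $w$ denote the weak topology on $X$ (generated by all norm-continuous linear functionals on $X$). Then every topologically linearly independent subset of $(X,w)$ is finite.
   Context: A subset $A\subseteq X\setminus\{0\}$ of a topological vector space $X$ is topologically linearly independent if for every neighborhood $W$ of $0$ there is a neighborhood $U$ of $0$ such that for every finite $F\subseteq A$ and reals $\{r_a: a\in F\}$, $\sum_{a\in F}r_a a\in U$ implies $r_a a\in W$ for all $a\in F$. *)

(* Defs.v *)
From mathcomp Require Import all_boot all_order all_algebra.
From mathcomp Require Import all_classical all_reals all_analysis.
Set Implicit Arguments. Unset Strict Implicit. Unset Printing Implicit Defensive.
Import Order.TTheory GRing.Theory Num.Theory.
Import numFieldNormedType.Exports.
Local Open Scope classical_set_scope.
Local Open Scope ring_scope.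

Definition cont_lin_functional (R : realType) (X : normedModType R)
  (f : X -> R) : Prop :=
  (forall (a : R) (x y : X), f (a *: x + y) = a * f x + f y) /\ continuous f.

(* W is a neighbourhood of 0 in the weak topology sigma(X, X') (X' = topological dual): it contains
   a basic weak open set {x | |f_i x| < eps for i < n} determined by finitely
   many continuous linear functionals f_0..f_(n-1) and eps > 0. *)
Definition weak_nbhs0 (R : realType) (X : normedModType R) (W : set X) : Prop :=
  exists (n : nat) (f : ordinal n -> X -> R) (eps : R),
    [/\ forall i, cont_lin_functional (f i), 0 < eps &
        [set x | forall i, `|f i x| < eps] `<=` W].

Definition weak_top_lin_indep (R : realType) (X : normedModType R) (A : set X) : Prop :=
  A `<=` ~` [set 0] /\
  forall W : set X, weak_nbhs0 W ->
    exists U : set X, weak_nbhs0 U /\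
      forall (F : seq X) (r : X -> R),
        uniq F -> {subset F <= A} ->
        U (\sum_(a <- F) r a *: a) ->
        forall a, a \in F -> W (r a *: a).

(* Main.v *)
Require Import Defs.
From mathcomp Require Import all_boot all_order all_algebra.
From mathcomp Require Import all_classical all_reals all_analysis.
From mathcomp Require Import ring lra.
Set Implicit Arguments. Unset Strict Implicit. Unset Printing Implicit Defensive.
Import Order.TTheory GRing.Theory Num.Theory.
Import numFieldNormedType.Exports.
Local Open Scope classical_set_scope.
Local Open Scope ring_scope.

Section Series.
Variables (R : realType) (X : normedModType R) (a : nat -> X) (phi : nat -> X -> R).
Hypotheses (philin : forall k (t : R) x y, phi k (t *: x + y) = t * phi k x + phi k y)
  (phib : forall k x, `|phi k x| <= `|x|) (phia : forall k, phi k (a k) != 0).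

Definition Ss (s : seq R) x := \sum_(0 <= k < size s) s`_k * phi k x.
Definition bnd (s : seq R) : R :=
  if size s is j'.+1 then Num.min (s`_j' / 2) (`|Ss s (a j')| / (4 * (`|a j'| + 1))) else 1.
Definition nextc s := let b := bnd s in
  if Ss s (a (size s)) + b * phi (size s) (a (size s)) == 0 then b / 2 else b.
Fixpoint pre n := if n is n'.+1 then rcons (pre n') (nextc (pre n')) else [::].
Definition c k := nextc (pre k).
Definition u x k := c k * phi k x.

Lemma size_pre n : size (pre n) = n.
Proof. by elim: n => //= n IH; rewrite size_rcons IH. Qed.

Lemma nth_pre n k : (k < n)%N -> (pre n)`_k = c k.
Proof.
elim: n => // n IH; rewrite ltnS leq_eqVlt => /orP[/eqP->|kn] /=;
  rewrite nth_rcons size_pre ?ltnn ?eqxx // kn; exact: IH.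
Qed.

Lemma Ss_pre n x : Ss (pre n) x = series (u x) n.
Proof.
rewrite /Ss size_pre seriesEnat /=.
by apply: eq_big_nat => k /andP[_ kn]; rewrite nth_pre.
Qed.

Lemma step j : 0 < bnd (pre j) ->
  [/\ 0 < c j, series (u (a j)) j.+1 != 0 & c j <= bnd (pre j)].
Proof.
move=> b0.
have cE : c j = if series (u (a j)) j + bnd (pre j) * phi j (a j) == 0
    then bnd (pre j) / 2 else bnd (pre j).
  by rewrite /c /nextc size_pre Ss_pre.
rewrite seriesSr {2}/u cE.
have pj := phia j.
set b := bnd (pre j) in b0 cE *; set S0 := series (u (a j)) j; set p := phi j (a j) in pj *.
case: eqP => E.
  split; first by rewrite divr_gt0.
    have -> : S0 = - (b * p) by apply/eqP; rewrite -addr_eq0; apply/eqP.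
    have -> : - (b * p) + b / 2 * p = - (b / 2 * p) by field.

    by rewrite oppr_eq0 mulf_neq0 // gt_eqF // divr_gt0.
  by rewrite ler_pdivrMr // ler_pMr // ler1n.
by split => //; apply/eqP.
Qed.

Lemma bnd_pos j : 0 < bnd (pre j).
Proof.
elim: j => [|j IH]; first by rewrite /bnd /= ltr01.
have [cj Sj _] := step IH.
rewrite /bnd size_pre nth_pre // Ss_pre lt_min; apply/andP; split.
  by rewrite divr_gt0.
by rewrite divr_gt0 ?normr_gt0 // mulr_gt0 // ltr_pwDr.
Qed.

Lemma c_pos j : 0 < c j.
Proof. by have [] := step (bnd_pos j). Qed.

Lemma S_neq0 j : series (u (a j)) j.+1 != 0.
Proof. by have [] := step (bnd_pos j). Qed.

Lemma c_S j : c j.+1 <= c j / 2 /\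
  c j.+1 <= `|series (u (a j)) j.+1| / (4 * (`|a j| + 1)).
Proof.
have [_ _] := step (bnd_pos j.+1).
rewrite /bnd size_pre nth_pre // Ss_pre le_min => /andP[h1 h2]; by split.
Qed.

Lemma c0 : c 0 <= 1.
Proof. by have [_ _] := step (bnd_pos 0). Qed.

Lemma tail s N : \sum_(s <= k < s + N) c k + 2 * c (s + N) <= 2 * c s.
Proof.
elim: N => [|N IH]; first by rewrite addn0 big_geq // add0r.
rewrite addnS big_nat_recr ?leq_addr //=.
have [h _] := c_S (s + N); lra.
Qed.

Lemma tail' s n : \sum_(s <= k < n) c k <= 2 * c s.
Proof.
have [sn|ns] := leqP s n.
  have := tail s (n - s); rewrite subnKC // => h.
  have := c_pos n; lra.
rewrite big_geq; last exact: ltnW.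
apply: mulr_ge0 => //; exact: ltW (c_pos s).
Qed.



Lemma partial x m n : (m <= n)%N ->
  `|series (u x) n - series (u x) m| <= 2 * c m * `|x|.
Proof.
move=> mn; rewrite sub_series_geq //.
apply: le_trans (ler_norm_sum _ _ _) _.
apply: (@le_trans _ _ (\sum_(m <= k < n) c k * `|x|)).
  apply: ler_sum => k _; rewrite /u normrM gtr0_norm ?c_pos //.
  by rewrite ler_wpM2l // ltW // c_pos.
by rewrite -mulr_suml ler_wpM2r // tail'.
Qed.

Lemma cvgu x : cvgn (series (u x)).
Proof.
apply: normed_cvg; apply: nondecreasing_is_cvgn.
  apply/nondecreasing_seqP => k /=; rewrite seriesSr lerDl; exact: normr_ge0.
exists (2 * `|x|) => _ [n _ <-] /=.
apply: (@le_trans _ _ (\sum_(0 <= k < n) c k * `|x|)).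
  apply: ler_sum => k _; rewrite /u normrM gtr0_norm ?c_pos //.
  by rewrite ler_wpM2l // ltW // c_pos.
rewrite -mulr_suml ler_wpM2r //.
apply: le_trans (tail' 0 n) _.
have := c0; lra.
Qed.

Definition fser x := limn (series (u x)).

Lemma fser_cvg x : series (u x) @ \oo --> fser x.
Proof. exact: cvgu. Qed.

Lemma fser_bound x s N B : (forall n, (N <= n)%N -> `|series (u x) n - s| <= B) ->
  `|fser x - s| <= B.
Proof.
move=> H; rewrite ler_norml; apply/andP; split.
  rewrite lerBrDr; apply: (cvgr_to_ge (@fser_cvg x)).
  near=> n; have := H n; rewrite ler_norml => /(_ _)/andP[].
    by near: n; exact: nbhs_infty_ge.
  move=> h1 h2; lra.
rewrite lerBlDr; apply: (cvgr_to_le (@fser_cvg x)).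
near=> n; have := H n; rewrite ler_norml => /(_ _)/andP[].
  by near: n; exact: nbhs_infty_ge.
move=> h1 h2; lra.
Unshelve. all: by end_near.
Qed.

Lemma fser_lin (t : R) x y : fser (t *: x + y) = t * fser x + fser y.
Proof.
have e : u (t *: x + y) = t *: u x + u y.
  by apply/funext => k; rewrite /u philin !fctE mulrDr mulrCA.
rewrite /fser e lim_seriesD; last exact: cvgu.
  rewrite lim_seriesZ //; exact: cvgu.
apply: is_cvg_seriesZ; exact: cvgu.
Qed.

Lemma fser_bnd x : `|fser x| <= 2 * `|x|.
Proof.
rewrite -(subr0 (fser x)); apply: (@fser_bound x 0 0) => n _.
have s0 : series (u x) 0 = 0 by rewrite seriesEnat /= big_geq.
have := @partial x 0 n (leq0n n); rewrite s0 subr0 => h.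
apply: le_trans h _; rewrite ler_wpM2r //; have := c0; lra.
Qed.

Lemma fser_nz j : fser (a j) != 0.
Proof.
have hS := S_neq0 j; have [_ hc] := c_S j.
set S := series (u (a j)) j.+1 in hS hc.
have hb : `|fser (a j) - S| <= 2 * c j.+1 * `|a j|.
  apply: (@fser_bound _ _ j.+1) => n jn.
  exact: (@partial (a j) j.+1 n jn).
have cp := c_pos j.+1.
have na := normr_ge0 (a j).
have Sp : 0 < `|S| by rewrite normr_gt0.
rewrite ler_pdivlMr ?mulr_gt0 ?ltr_pwDr // in hc.
apply/eqP => f0; rewrite f0 sub0r normrN in hb.
have : 2 * c j.+1 * `|a j| < `|S| by nra.
by rewrite ltNge hb.
Qed.

End Series.

Section HB.
Variables (R : realType) (X : normedModType R) (a : X).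
Hypothesis a0 : a != 0.

Definition Good (G : set (X * R)) :=
  [/\ forall t y1 v1 y2 v2, G (y1, v1) -> G (y2, v2) -> G (t *: y1 + y2, t * v1 + v2),
      forall x v w, G (x, v) -> G (x, w) -> v = w &
      forall x v, G (x, v) -> v <= `|x| ].

Definition G0 : set (X * R) := [set p | exists t, p = (t *: a, t * `|a|)].

Definition PP (G : set (X * R)) := Good G /\ (G = set0 \/ G0 `<=` G).

Lemma G0_good : Good G0.
Proof.
split.
- move=> t y1 v1 y2 v2 [s1 [-> ->]] [s2 [-> ->]].
  by exists (t * s1 + s2); rewrite scalerDl scalerA mulrDl mulrA.
- move=> x v w [s1 [-> ->]] [s2 [e ->]].
  have : (s1 - s2) *: a = 0 by rewrite scalerBl e subrr.
  by move/eqP; rewrite scaler_eq0 (negbTE a0) orbF subr_eq0 => /eqP ->.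
- move=> x v [s [-> ->]]; rewrite normrZ ler_wpM2r //; exact: ler_norm.
Qed.

Lemma chainP (F : set (set (X * R))) : F `<=` PP -> total_on F subset ->
  PP (\bigcup_(G in F) G).
Proof.
move=> FP tot.
have both G1 G2 p q : F G1 -> F G2 -> G1 p -> G2 q ->
    exists G, [/\ F G, G p & G q].
  move=> F1 F2 Gp Gq; have [h|h] := tot _ _ F1 F2.
    by exists G2; split => //; exact: h.
  by exists G1; split => //; exact: h.
split; first split.
- move=> t y1 v1 y2 v2 [G1 F1 G1p] [G2 F2 G2q].
  have [G [FG Gp Gq]] := both _ _ _ _ F1 F2 G1p G2q.
  have [[lin _ _] _] := FP _ FG; exists G => //; exact: lin.
- move=> x v w [G1 F1 G1p] [G2 F2 G2q].
  have [G [FG Gp Gq]] := both _ _ _ _ F1 F2 G1p G2q.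
  have [[_ fn _] _] := FP _ FG; exact: fn Gp Gq.
- move=> x v [G FG Gp]; have [[_ _ dm] _] := FP _ FG; exact: dm Gp.
have [[G [FG G0G]]|no] := pselect (exists G, F G /\ G0 `<=` G).
  right => p G0p; exists G => //; exact: G0G.
left; apply/seteqP; split => // p [G FG Gp].
have [_ [E|E]] := FP _ FG; first by rewrite E in Gp.
by exfalso; apply: no; exists G.
Qed.


Lemma HB_exists : exists phi : X -> R,
  [/\ forall t x y, phi (t *: x + y) = t * phi x + phi y,
      forall x, phi x <= `|x| & phi a = `|a|].
Proof.
have [M [[[lin fn dm] M0] Mmax]] := Zorn_bigcup chainP.
have G0M : G0 `<=` M.
  case: M0 => // E; exfalso; apply: (Mmax G0); last first.
    by split; [exact: G0_good | right].
  rewrite E; split => // h.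
  by have := h (0 *: a, 0 * `|a|) (ex_intro _ 0 erefl).
have M00 : M (0, 0).
  by have := G0M (0 *: a, 0 * `|a|) (ex_intro _ 0 erefl); rewrite scale0r mul0r.
have Mscale s y v : M (y, v) -> M (s *: y, s * v).
  by move=> h; have := lin s _ _ _ _ h M00; rewrite !addr0.
have total x : exists v, M (x, v).
  apply: contrapT => nx.
  pose S := [set z | exists y v, M (y, v) /\ z = v - `|y - x|].
  have Sne : S !=set0 by exists (0 - `|0 - x|); exists 0, 0.
  have Sub z w : M (z, w) -> ubound S (`|z + x| - w).
    move=> Mzw _ [y [v [Myv ->]]].
    have := dm _ _ (lin 1 _ _ _ _ Myv Mzw); rewrite scale1r mul1r => h.
    have := ler_normD (y - x) (z + x).
    rewrite -addrA [z + x]addrC addKr => h2; lra.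
  set c := sup S.
  have cge y v : M (y, v) -> v - `|y - x| <= c.
    move=> Myv; apply: sup_upper_bound; last by exists y, v.
    by split => //; exists (`|0 + x| - 0); exact: Sub M00.
  have cle z w : M (z, w) -> c <= `|z + x| - w.
    by move=> Mzw; apply: ge_sup => //; exact: Sub.
  have key s y v : 0 < s -> M (y, v) ->
      v + s * c <= `|y + s *: x| /\ v - s * c <= `|y - s *: x|.
    move=> s0 Myv; have My' := Mscale s^-1 _ _ Myv.
    have h1 := cle _ _ My'; have h2 := cge _ _ My'.
    have e1 : y + s *: x = s *: (s^-1 *: y + x).
      by rewrite scalerDr scalerA divff ?gt_eqF // scale1r.
    have e2 : y - s *: x = s *: (s^-1 *: y - x).
      by rewrite scalerBr scalerA divff ?gt_eqF // scale1r.
    rewrite e1 e2 !normrZ gtr0_norm //; split.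
      have := ler_wpM2l (ltW s0) h1; rewrite mulrBr mulrA divff ?gt_eqF // mul1r.
      move=> h; lra.
    have := ler_wpM2l (ltW s0) h2; rewrite mulrBr mulrA divff ?gt_eqF // mul1r.
    move=> h; lra.
  pose B := [set p | exists y v t, M (y, v) /\ p = (y + t *: x, v + t * c)].
  have MB : M `<=` B.
    by move=> [y v] Myv; exists y, v, 0; rewrite scale0r mul0r !addr0.
  apply: (Mmax B).
    split => // h; apply: nx; exists c; apply: h.
    by exists 0, 0, 1; rewrite scale1r mul1r !add0r.
  split; last by right; exact: subset_trans G0M MB.
  split.
  - move=> t _ _ _ _ [y1 [v1 [t1 [M1 [-> ->]]]]] [y2 [v2 [t2 [M2 [-> ->]]]]].
    exists (t *: y1 + y2), (t * v1 + v2), (t * t1 + t2); split; first exact: lin.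
    congr (_, _); first by rewrite scalerDr scalerDl scalerA addrACA.
    by ring.
  - move=> x0 v w [y1 [v1 [t1 [M1 [e1 ->]]]]] [y2 [v2 [t2 [M2 [e2 ->]]]]].
    have e : y1 + t1 *: x = y2 + t2 *: x by rewrite -e1 -e2.
    have [tt|tn] := eqVneq t1 t2.
      move: e; rewrite tt => /addIr e; rewrite e in M1.
      by rewrite (fn _ _ _ M1 M2).
    exfalso; apply: nx.
    have M21 := Mscale (t1 - t2)^-1 _ _ (lin (-1) _ _ _ _ M1 M2).
    have ex : x = (t1 - t2)^-1 *: (-1 *: y1 + y2); last first.
      by eexists; rewrite ex; exact: M21.
    rewrite scaleN1r [- y1 + y2]addrC.
    have -> : y2 - y1 = (t1 - t2) *: x.
      have -> : y2 = y1 + t1 *: x - t2 *: x by rewrite e addrK.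
      by rewrite scalerBl -[y1 + _ - _]addrA [y1 + _ - y1]addrC addKr.
    by rewrite scalerA mulVf ?scale1r // subr_eq0.
  - move=> x0 v [y [v1 [t [Myv [-> ->]]]]].
    have [tn|tp|->] := ltgtP t 0.
    + have := key (- t) _ _ _ Myv; rewrite oppr_gt0 => /(_ tn) [_].
      by rewrite mulNr opprK scaleNr opprK.
    + by have [] := key t _ _ tp Myv.
    + by rewrite scale0r mul0r !addr0; exact: dm.
pose phi x := xget 0 [set v | M (x, v)].
have Mphi x : M (x, phi x) by exact: (xgetPex 0 (total x)).
exists phi; split.
- move=> t x y; apply: fn (Mphi _) _; exact: lin.
- by move=> x; exact: dm (Mphi x).
- apply: fn (Mphi a) _; have := G0M (1 *: a, 1 * `|a|) (ex_intro _ 1 erefl).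
  by rewrite scale1r mul1r.
Qed.
End HB.

Lemma cont_bnd (R : realType) (X : normedModType R) (f : X -> R) C :
  (forall (t : R) x y, f (t *: x + y) = t * f x + f y) ->
  (forall x, `|f x| <= C * `|x|) -> continuous f.
Proof.
move=> hf hb x; apply/cvgrPdist_lt => e e0.
have D0 : 0 < `|C| + 1 by rewrite ltr_pwDr.
have : \forall y \near x, `|x - y| < e / (`|C| + 1).
  by apply: cvgr_dist_lt; [exact: cvg_id | rewrite divr_gt0].
apply: filterS => y hy.
have -> : f x - f y = f (x - y).
  by have := hf (-1) y x; rewrite scaleN1r mulN1r addrC => ->; rewrite addrC.
apply: le_lt_trans (hb _) _.
apply: (@le_lt_trans _ _ ((`|C| + 1) * `|x - y|)).
  by rewrite ler_wpM2r // (le_trans (ler_norm _)) // lerDl.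
by rewrite -ltr_pdivlMl // mulrC.
Qed.

Section Aux.
Variables (R : realType) (X : normedModType R).

Definition islin (f : X -> R) := forall (t : R) (x y : X), f (t *: x + y) = t * f x + f y.

Lemma islin0 f : islin f -> f 0 = 0.
Proof.
move=> hf; have := hf 1 0 0; rewrite scaler0 addr0 mul1r => h.
by apply: (addrI (f 0)); rewrite addr0 -h.
Qed.

Lemma islinZ f : islin f -> forall t x, f (t *: x) = t * f x.
Proof. by move=> hf t x; have := hf t x 0; rewrite addr0 (islin0 hf) addr0. Qed.

Lemma islinD f : islin f -> forall x y, f (x + y) = f x + f y.
Proof. by move=> hf x y; have := hf 1 x y; rewrite scale1r mul1r. Qed.

Lemma islinN f : islin f -> forall x, f (- x) = - f x.
Proof. by move=> hf x; rewrite -scaleN1r islinZ // mulN1r. Qed.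

Lemma islin_sum f (I : Type) (s : seq I) (P : pred I) (F : I -> X) : islin f ->
  f (\sum_(i <- s | P i) F i) = \sum_(i <- s | P i) f (F i).
Proof.
move=> hf; elim: s => [|x s IH]; first by rewrite !big_nil islin0.
by rewrite !big_cons; case: (P x); rewrite ?islinD ?IH.
Qed.

Lemma seqA (A : set X) :
  ~ finite_set A -> exists a : nat -> X, (forall n, A (a n)) /\ injective a.
Proof.
move=> /infiniteP /pcard_leP [f].
exists f; split.
  move=> n; have := @funS _ _ _ _ f n; apply; done.
move=> m n; have := @inj _ _ _ f m n; rewrite !inE; by apply.
Qed.

Lemma dep (F : fieldType) m (M : 'M[F]_(m.+1, m)) : exists2 v : 'rV_m.+1, v != 0 & v *m M = 0.
Proof.
have : kermx M != 0.
  rewrite kermx_eq0 /row_free; apply/negP => /eqP h.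
  by have := rank_leq_col M; rewrite h ltnn.
move=> /rowV0Pn [v vK v0]; exists v => //; exact/sub_kermxP.
Qed.


Lemma exists_f (a : nat -> X) : (forall n, a n != 0) ->
  exists f : X -> R, cont_lin_functional f /\ forall n, f (a n) != 0.
Proof.
move=> an0.
have [phi Hphi] := choice (fun n => HB_exists (an0 n)).
have philin k : islin (phi k) by have [] := Hphi k.
have phib k x : `|phi k x| <= `|x|.
  have [_ h _] := Hphi k; rewrite ler_norml h andbT.
  by rewrite lerNl -islinN // -(normrN x) h.
have phia k : phi k (a k) != 0 by have [_ _ ->] := Hphi k; rewrite normr_eq0.
exists (fser a phi); split; last by move=> n; exact: fser_nz.
split; first by move=> t x y; exact: fser_lin.
apply: (@cont_bnd _ _ _ 2); first by move=> t x y; exact: fser_lin.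
by move=> x; exact: fser_bnd.
Qed.

End Aux.

Theorem proposition4p7 (R : realType) (X : normedModType R) (A : set X) :
  weak_top_lin_indep A -> finite_set A.
Proof.
move=> [A0 HA]; apply: contrapT => /seqA [a [Aa ainj]].
have an0 n : a n != 0 by apply/eqP => h; apply: (A0 (a n) (Aa n)); rewrite h.
have [f [[flin fc] fa]] := exists_f an0.
pose W := [set x : X | `|f x| < 1].
have [] := HA W.
  exists 1%N, (fun _ => f), 1; split => //.
  by move=> x /= /(_ ord0).
move=> U [[m [g [eps [gc eps0 gU]]]] HU].
have [r r0 rM] := dep (\matrix_(i < m.+1, j < m) g j (a i)).
have [i0 ri0] : exists i, r 0 i != 0.
  apply/existsP; apply: contraR r0 => /existsPn h.
  by apply/eqP/rowP => i; rewrite mxE; apply/eqP; have := h i; rewrite negbK.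
pose t := (r 0 i0 * f (a i0))^-1.
pose rho (x : X) := t * \sum_(i < m.+1 | a i == x) r 0 i.
have rhoa (j : 'I_m.+1) : rho (a j) = t * r 0 j.
  rewrite /rho; congr (_ * _).
  rewrite (eq_bigl (pred1 j)) ?big_pred1_eq // => i /=.
  by rewrite (inj_eq ainj).
pose F := [seq a (val i) | i <- enum 'I_m.+1].
have Fu : uniq F.
  rewrite map_inj_uniq ?enum_uniq // => i j /ainj; exact: val_inj.
have FA : {subset F <= A}.
  by move=> x /mapP [i _ ->]; apply/mem_set; exact: Aa.
have HUs : U (\sum_(x <- F) rho x *: x).
  apply: gU => j /=.
  rewrite islin_sum; last exact: (proj1 (gc j)).
  rewrite big_map big_enum /=.
  have glin : islin (g j) by exact: (proj1 (gc j)).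
  under eq_bigr => i _ do rewrite (islinZ glin) rhoa.
  have := congr1 (fun v : 'M[R]_(1, m) => v 0 j) rM; rewrite !mxE => e.
  under eq_bigr => i _ do rewrite -mulrA.
  rewrite -mulr_sumr.
  rewrite (eq_bigr (fun i => r 0 i * (\matrix_(i0, j0) g j0 (a i0)) i j)); last first.
    by move=> i _; rewrite mxE.
  by rewrite e mulr0 normr0.
have := HU F rho Fu FA HUs (a i0).
have aF : a i0 \in F by apply/mapP; exists i0; rewrite ?mem_enum.
move=> /(_ aF); rewrite /W /= islinZ // rhoa /t.
rewrite -mulrA mulVf ?normr1 ?ltxx //.
by rewrite mulf_neq0.
Qed.
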